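(* Consider $N$ material points $(P_i,m_i)$ with Cartesian coordinates $\mathbf X(\mathbf q,t)\in\mathbb R^{3N}$ (smooth, $\mathbf q\in\mathbb R^\ell$), momenta $\mathbf Q=(m_1\dot P_1,\dots,m_N\dot P_N)$, subject to a total force $\mathcal F=\mathcal F_0+\mathcal F_S+\mathcal F_A+\mathcal F_R+\mathcal G$, where: (i) $J_{\mathbf q}^T\mathbf X\,\mathcal F_0=\nabla_{\mathbf q}U_0$ for a smooth $U_0(\mathbf q,t)$; (ii) $J_{\mathbf q}^T\mathbf X\,\mathcal F_S=\mathcal O_s[\mathcal U_S]$ for some $s\ge0$ and smooth $\mathcal U_S(\mathbf q,\dots,\mathbf q^{(s+1)},t)$; (iii) $\mathcal F_A=\mathbb L\mathbf X^{(h+1)}$ for some integer $h\ge1$ and constant diagonal positive matrix $\mathbb L$, with $\mathcal U_A=\frac12\mathbb L\mathbf X^{(h)}\cdot\mathbf X^{(h)}$; (iv) $J_{\mathbf q}^T\mathbf X\,\mathcal F_R=-\nabla_{\mathbf q^{(\sigma)}}\mathcal R$ for some integer $\sigma\ge1$ and smooth $\mathcal R(\mathbf q,\dots,\mathbf q^{(\sigma)},t)$; (v) $\mathcal G=\mathcal G(\mathbf q,\dots,\mathbf q^{(\varrho-1)},t)$ for some integer $\varrho\ge1$, and $\gamma_\varrho=(J_{\mathbf q}^T\mathbf X\,\mathcal G)\cdot\mathbf q^{(\varrho)}$. Let $r=\max(s,h-1,\sigma,\varrho)$, $\mathcal L=\frac12\mathbf Q\cdot\dot{\mathbf X}+U_0$,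 and $$\mathcal Y_r=\frac{d^r\mathcal L}{dt^r}+\frac{d^{r-s}\mathcal U_S}{dt^{r-s}}-\frac1h\frac{d^{r-(h-1)}\mathcal U_A}{dt^{r-(h-1)}}-\frac{d^{r-\sigma}\mathcal R}{dt^{r-\sigma}}+\frac{d^{r-\varrho}\gamma_\varrho}{dt^{r-\varrho}}.$$ Then $\mathcal O_r[\mathcal Y_r]=J_{\mathbf q}^T\mathbf X(\mathcal F-\dot{\mathbf Q})$; in particular the Newton equations projected on the Lagrangian components, $J_{\mathbf q}^T\mathbf X\,\dot{\mathbf Q}=J_{\mathbf q}^T\mathbf X\,\mathcal F$, are equivalent to $$\nabla_{\mathbf q^{(r)}}\mathcal Y_r-(r+1)\frac{d}{dt}\nabla_{\mathbf q^{(r+1)}}\mathcal Y_r=0.$$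
   Context: $\mathbf q^{(h)}$ denotes the $h$-th time derivative (with $\mathbf q^{(0)}=\mathbf q$), treated as independent variables; $\mathbf X^{(h)}$ is the $h$-th total time derivative of $\mathbf X(\mathbf q(t),t)$ expressed as a function of $\mathbf q,\dots,\mathbf q^{(h)},t$. For $F(\mathbf q,\dots,\mathbf q^{(k)},t)$, $\frac{dF}{dt}=\partial_tF+\sum_{j=0}^k\nabla_{\mathbf q^{(j)}}F\cdot\mathbf q^{(j+1)}$ is the total time derivative. For $\mathbf w\in\mathbb R^{3N}$, $J_{\mathbf q}^T\mathbf X\,\mathbf w$ is the $\ell$-vector with components $\mathbf w\cdot\partial\mathbf X/\partial q_k$ (Lagrangian components). For $r\ge0$ and $\mathcal Y_r$ depending on $\mathbf q,\dots,\mathbf q^{(r+1)},t$, $\mathcal O_r[\mathcal Y_r]=\nabla_{\mathbf q^{(r)}}\mathcal Y_r-(r+1)\frac{d}{dt}\nabla_{\mathbf q^{(r+1)}}\mathcal Y_r$. *)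

(* Defs.v *)
From Stdlib Require Import Reals Lra Lia List ClassicalEpsilon.
Open Scope R_scope.

(** A point of the (infinite) jet space: [z j i] is the i-th component of
    q^(j) (so z 0 = q, z 1 = qdot, ...).  Only components i < l matter. *)
Definition Jet := nat -> nat -> R.
Definition JF := Jet -> R -> R.

Definition upd (z : Jet) (j i : nat) (x : R) : Jet :=
  fun j' i' => if andb (Nat.eqb j' j) (Nat.eqb i' i) then x else z j' i'.

Fixpoint fsum (n : nat) (f : nat -> R) : R :=
  match n with O => 0 | S n' => fsum n' f + f n' end.

Inductive Dir := DirT | DirQ (j i : nat).

Definition has_pd (d : Dir) (F : JF) (z : Jet) (t v : R) : Prop :=
  match d with
  | DirT => derivable_pt_lim (fun s => F z s) t v
  | DirQ j i => derivable_pt_lim (fun x => F (upd z j i x) t) (z j i) v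
  end.

Definition pd (d : Dir) (F : JF) : JF :=
  fun z t => epsilon (inhabits 0) (fun v => has_pd d F z t v).

Definition pdq (j i : nat) (F : JF) : JF := pd (DirQ j i) F.
Definition pdt (F : JF) : JF := pd DirT F.

Definition pds (ds : list Dir) (F : JF) : JF := fold_right pd F ds.

Definition depends_upto (l K : nat) (F : JF) : Prop :=
  forall (z z' : Jet) (t : R),
    (forall j i, (j <= K)%nat -> (i < l)%nat -> z j i = z' j i) -> F z t = F z' t.

Definition jcont (l K : nat) (F : JF) : Prop :=
  forall (z : Jet) (t eps : R), 0 < eps -> exists del, 0 < del /\
    forall (z' : Jet) (t' : R),
      (forall j i, (j <= K)%nat -> (i < l)%nat -> Rabs (z' j i - z j i) < del) ->
      Rabs (t' - t) < del -> Rabs (F z' t' - F z t) < eps.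

(** F is a smooth (C^infinity) function of (q, ..., q^(K), t) in R^(l(K+1)+1):
    all iterated partial derivatives exist everywhere and are continuous. *)
Definition smooth (l K : nat) (F : JF) : Prop :=
  depends_upto l K F /\
  forall ds : list Dir,
    (forall (d : Dir) (z : Jet) (t : R), exists v, has_pd d (pds ds F) z t v) /\
    jcont l K (pds ds F).

Definition jorder (l : nat) (F : JF) : nat :=
  epsilon (inhabits 0%nat)
    (fun K => depends_upto l K F /\ forall K', depends_upto l K' F -> (K <= K')%nat).

Definition tder (l : nat) (F : JF) : JF :=
  fun z t => pdt F z t +
    fsum (S (jorder l F)) (fun j => fsum l (fun i => pdq j i F z t * z (S j) i)).

Definition tdern (l n : nat) (F : JF) : JF := Nat.iter n (tder l) F.

Definition JT (l n : nat) (X : nat -> JF) (w : nat -> JF) (k : nat) : JF :=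
  fun z t => fsum n (fun a => pdq 0 k (X a) z t * w a z t).

Definition Op (l r : nat) (Y : JF) (k : nat) : JF :=
  fun z t => pdq r k Y z t - INR (S r) * tder l (pdq (S r) k Y) z t.

(* Main.v *)
Require Import Defs.
From Stdlib Require Import Reals Lra Lia List ClassicalEpsilon FunctionalExtensionality Classical.
From Coquelicot Require Import Coquelicot.
Open Scope R_scope.

Definition lin (d:Dir) (F:JF) (z:Jet) (t:R) : R -> R :=
  match d with DirT => fun s => F z s | DirQ j i => fun x => F (upd z j i x) t end.
Definition getd (d:Dir) (z:Jet) (t:R) : R :=
  match d with DirT => t | DirQ j i => z j i end.

Lemma has_pd_lin d F z t v : has_pd d F z t v <-> derivable_pt_lim (lin d F z t) (getd d z t) v.
Proof. destruct d; reflexivity. Qed.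

Lemma pd_spec d F z t v : has_pd d F z t v -> pd d F z t = v.
Proof.
  intro H. unfold pd.
  assert (H2 : has_pd d F z t (epsilon (inhabits 0) (fun v => has_pd d F z t v))).
  { apply epsilon_spec. eauto. }
  rewrite has_pd_lin in H, H2. eapply uniqueness_limite; eauto.
Qed.

Definition PD (F:JF) := forall d z t, exists v, has_pd d F z t v.

Lemma pd_ok F d z t : PD F -> has_pd d F z t (pd d F z t).
Proof. intro H. destruct (H d z t) as [v Hv]. rewrite (pd_spec _ _ _ _ _ Hv). exact Hv. Qed.

Definition fplus (F G : JF) : JF := fun z t => F z t + G z t.
Definition fmul (F G : JF) : JF := fun z t => F z t * G z t.
Definition fscal (c : R) (F : JF) : JF := fun z t => c * F z t.
Definition fcst (c : R) : JF := fun _ _ => c.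
Definition coord (j i : nat) : JF := fun z _ => z j i.
Definition fsumF (n : nat) (f : nat -> JF) : JF := fun z t => fsum n (fun a => f a z t).

Lemma upd_same z j i : upd z j i (z j i) = z.
Proof. extensionality a; extensionality b; unfold upd.
  destruct (Nat.eqb a j) eqn:E1; destruct (Nat.eqb b i) eqn:E2; simpl; auto.
  apply Nat.eqb_eq in E1; apply Nat.eqb_eq in E2; subst; auto. Qed.

Lemma lin_plus d F G z t : lin d (fplus F G) z t = fun x => lin d F z t x + lin d G z t x.
Proof. destruct d; reflexivity. Qed.
Lemma lin_mul d F G z t : lin d (fmul F G) z t = fun x => lin d F z t x * lin d G z t x.
Proof. destruct d; reflexivity. Qed.
Lemma lin_scal d c F z t : lin d (fscal c F) z t = fun x => c * lin d F z t x.
Proof. destruct d; reflexivity. Qed.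

Lemma has_pd_plus d F G z t u v : has_pd d F z t u -> has_pd d G z t v -> has_pd d (fplus F G) z t (u+v).
Proof. rewrite !has_pd_lin, lin_plus. intros. apply derivable_pt_lim_plus; auto. Qed.
Lemma has_pd_mul d F G z t u v : has_pd d F z t u -> has_pd d G z t v ->
  has_pd d (fmul F G) z t (u * G z t + F z t * v).
Proof. rewrite !has_pd_lin, lin_mul. intros H1 H2.
  pose proof (derivable_pt_lim_mult _ _ _ _ _ H1 H2) as H.
  assert (E1: lin d F z t (getd d z t) = F z t) by (destruct d; simpl; try reflexivity; rewrite upd_same; reflexivity).
  assert (E2: lin d G z t (getd d z t) = G z t) by (destruct d; simpl; try reflexivity; rewrite upd_same; reflexivity).
  rewrite E1, E2 in H. exact H. Qed.
Lemma has_pd_scal d c F z t u : has_pd d F z t u -> has_pd d (fscal c F) z t (c*u).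
Proof. rewrite !has_pd_lin, lin_scal. intros. apply (derivable_pt_lim_scal _ c) in H. exact H. Qed.
Lemma has_pd_cst d c z t : has_pd d (fcst c) z t 0.
Proof. rewrite has_pd_lin. destruct d; apply derivable_pt_lim_const. Qed.

Lemma PD_plus F G : PD F -> PD G -> PD (fplus F G).
Proof. intros HF HG d z t. eexists. apply has_pd_plus; apply pd_ok; auto. Qed.
Lemma PD_mul F G : PD F -> PD G -> PD (fmul F G).
Proof. intros HF HG d z t. eexists. apply has_pd_mul; apply pd_ok; auto. Qed.
Lemma PD_scal c F : PD F -> PD (fscal c F).
Proof. intros HF d z t. eexists. apply has_pd_scal; apply pd_ok; auto. Qed.
Lemma PD_cst c : PD (fcst c).
Proof. intros d z t. eexists. apply has_pd_cst. Qed.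

Lemma pd_plus d F G : PD F -> PD G -> pd d (fplus F G) = fplus (pd d F) (pd d G).
Proof. intros. extensionality z; extensionality t. apply pd_spec, has_pd_plus; apply pd_ok; auto. Qed.
Lemma pd_mul d F G : PD F -> PD G -> pd d (fmul F G) = fplus (fmul (pd d F) G) (fmul F (pd d G)).
Proof. intros. extensionality z; extensionality t. apply pd_spec, has_pd_mul; apply pd_ok; auto. Qed.
Lemma pd_scal d c F : PD F -> pd d (fscal c F) = fscal c (pd d F).
Proof. intros. extensionality z; extensionality t. apply pd_spec, has_pd_scal; apply pd_ok; auto. Qed.
Lemma pd_cst d c : pd d (fcst c) = fcst 0.
Proof. extensionality z; extensionality t. apply pd_spec, has_pd_cst. Qed.

Definition deltad (d:Dir) (j i:nat) : R :=
  match d with DirT => 0 | DirQ j' i' => if andb (Nat.eqb j j') (Nat.eqb i i') then 1 else 0 end.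

Lemma has_pd_coord d j i z t : has_pd d (coord j i) z t (deltad d j i).
Proof.
  destruct d as [|j' i']; simpl.
  - apply derivable_pt_lim_const.
  - unfold coord, upd. destruct (andb (Nat.eqb j j') (Nat.eqb i i')).
    + apply derivable_pt_lim_id.
    + apply derivable_pt_lim_const.
Qed.
Lemma PD_coord j i : PD (coord j i).
Proof. intros d z t. eexists. apply has_pd_coord. Qed.
Lemma pd_coord d j i : pd d (coord j i) = fcst (deltad d j i).
Proof. extensionality z; extensionality t. apply pd_spec, has_pd_coord. Qed.

Lemma fsumF_S n f : fsumF (S n) f = fplus (fsumF n f) (f n).
Proof. reflexivity. Qed.
Lemma fsumF_0 f : fsumF 0 f = fcst 0.
Proof. reflexivity. Qed.

Lemma PD_fsumF n f : (forall a, (a < n)%nat -> PD (f a)) -> PD (fsumF n f).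
Proof. induction n; intros H.
  - rewrite fsumF_0. apply PD_cst.
  - rewrite fsumF_S. apply PD_plus; auto. Qed.
Lemma pd_fsumF d n f : (forall a, (a < n)%nat -> PD (f a)) ->
  pd d (fsumF n f) = fsumF n (fun a => pd d (f a)).
Proof. induction n; intros H.
  - rewrite fsumF_0, pd_cst. reflexivity.
  - rewrite fsumF_S, pd_plus, IHn; auto. apply PD_fsumF; auto. Qed.

Lemma dep_mono l K K' F : (K <= K')%nat -> depends_upto l K F -> depends_upto l K' F.
Proof. intros HK H z z' t Hz. apply H. intros; apply Hz; auto; lia. Qed.
Lemma dep_plus l K F G : depends_upto l K F -> depends_upto l K G -> depends_upto l K (fplus F G).
Proof. intros H1 H2 z z' t Hz. unfold fplus. rewrite (H1 z z' t), (H2 z z' t); auto. Qed.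
Lemma dep_mul l K F G : depends_upto l K F -> depends_upto l K G -> depends_upto l K (fmul F G).
Proof. intros H1 H2 z z' t Hz. unfold fmul. rewrite (H1 z z' t), (H2 z z' t); auto. Qed.
Lemma dep_scal l K c F : depends_upto l K F -> depends_upto l K (fscal c F).
Proof. intros H1 z z' t Hz. unfold fscal. rewrite (H1 z z' t); auto. Qed.
Lemma dep_cst l K c : depends_upto l K (fcst c).
Proof. intros z z' t Hz. reflexivity. Qed.
Lemma dep_coord l K j i : (j <= K)%nat -> (i < l)%nat -> depends_upto l K (coord j i).
Proof. intros Hj Hi z z' t Hz. unfold coord. auto. Qed.
Lemma dep_fsumF l K n f : (forall a, (a < n)%nat -> depends_upto l K (f a)) -> depends_upto l K (fsumF n f).
Proof. induction n; intros H.
  - rewrite fsumF_0. apply dep_cst.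
  - rewrite fsumF_S. apply dep_plus; auto. Qed.

Lemma lin_irrel l K F j i z t : depends_upto l K F -> (K < j \/ l <= i)%nat ->
  forall x, lin (DirQ j i) F z t x = F z t.
Proof. intros H Hji x. simpl. apply H. intros j' i' Hj' Hi'. unfold upd.
  destruct (Nat.eqb j' j) eqn:E1; destruct (Nat.eqb i' i) eqn:E2; simpl; auto.
  apply Nat.eqb_eq in E1; apply Nat.eqb_eq in E2; subst; lia. Qed.

Lemma has_pd_irrel l K F j i z t : depends_upto l K F -> (K < j \/ l <= i)%nat ->
  has_pd (DirQ j i) F z t 0.
Proof. intros H Hji. rewrite has_pd_lin.
  assert (E: lin (DirQ j i) F z t = fct_cte (F z t)).
  { extensionality x. rewrite (lin_irrel l K); auto. }
  rewrite E. apply derivable_pt_lim_const. Qed.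

Lemma pd_irrel l K F j i : depends_upto l K F -> (K < j \/ l <= i)%nat -> pd (DirQ j i) F = fcst 0.
Proof. intros. extensionality z; extensionality t. apply pd_spec. eapply has_pd_irrel; eauto. Qed.

Lemma dep_pd l K F d : PD F -> depends_upto l K F -> depends_upto l K (pd d F).
Proof.
  intros HP H z z' t Hz.
  destruct d as [|j i].
  - symmetry; apply pd_spec. rewrite has_pd_lin. simpl.
    pose proof (pd_ok F DirT z t HP) as Hd. rewrite has_pd_lin in Hd. simpl in Hd.
    assert (E: (fun s => F z' s) = (fun s => F z s)).
    { extensionality s. symmetry; apply H; auto. }
    rewrite E. exact Hd.
  - destruct (Compare_dec.le_lt_dec j K) as [Hj|Hj]; [destruct (Compare_dec.lt_dec i l) as [Hi|Hi]|].
    + symmetry; apply pd_spec. rewrite has_pd_lin. simpl.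
      pose proof (pd_ok F (DirQ j i) z t HP) as Hd. rewrite has_pd_lin in Hd. simpl in Hd.
      rewrite <- (Hz j i Hj Hi).
      assert (E: (fun x => F (upd z' j i x) t) = (fun x => F (upd z j i x) t)).
      { extensionality x. symmetry; apply H. intros j' i' Hj' Hi'. unfold upd.
        destruct (andb _ _); auto. }
      rewrite E. exact Hd.
    + rewrite (pd_irrel l K F j i H); [reflexivity| lia].
    + rewrite (pd_irrel l K F j i H); [reflexivity| lia].
Qed.

Lemma jcont_mono l K K' F : (K <= K')%nat -> jcont l K F -> jcont l K' F.
Proof. intros HK H z t eps He. destruct (H z t eps He) as [del [Hd H']].
  exists del; split; auto. intros z' t' Hz Ht. apply H'; auto. intros; apply Hz; auto; lia. Qed.

Lemma jcont_cst l K c : jcont l K (fcst c).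
Proof. intros z t eps He. exists 1; split; [lra|]. intros. unfold fcst.
  rewrite Rminus_diag, Rabs_R0. auto. Qed.

Lemma jcont_coord l K j i : (j <= K)%nat -> (i < l)%nat -> jcont l K (coord j i).
Proof. intros Hj Hi z t eps He. exists eps; split; auto. intros z' t' Hz Ht. unfold coord. auto. Qed.

Lemma jcont_plus l K F G : jcont l K F -> jcont l K G -> jcont l K (fplus F G).
Proof. intros H1 H2 z t eps He.
  destruct (H1 z t (eps/2)) as [d1 [Hd1 H1']]; [lra|].
  destruct (H2 z t (eps/2)) as [d2 [Hd2 H2']]; [lra|].
  exists (Rmin d1 d2); split; [apply Rmin_pos; auto|].
  intros z' t' Hz Ht. unfold fplus.
  assert (A1: Rabs (F z' t' - F z t) < eps/2).
  { apply H1'. intros; eapply Rlt_le_trans; [apply Hz; auto| apply Rmin_l].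
    eapply Rlt_le_trans; [apply Ht| apply Rmin_l]. }
  assert (A2: Rabs (G z' t' - G z t) < eps/2).
  { apply H2'. intros; eapply Rlt_le_trans; [apply Hz; auto| apply Rmin_r].
    eapply Rlt_le_trans; [apply Ht| apply Rmin_r]. }
  replace (F z' t' + G z' t' - (F z t + G z t)) with ((F z' t' - F z t) + (G z' t' - G z t)) by ring.
  eapply Rle_lt_trans; [apply Rabs_triang|]. lra. Qed.

Lemma jcont_mul l K F G : jcont l K F -> jcont l K G -> jcont l K (fmul F G).
Proof. intros H1 H2 z t eps He.
  set (a := F z t). set (b := G z t).
  assert (Hab: 0 < 1 + Rabs a + Rabs b) by (pose proof (Rabs_pos a); pose proof (Rabs_pos b); lra).
  set (e := Rmin 1 (eps / (2 * (1 + Rabs a + Rabs b)))).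
  assert (He0: 0 < e) by (apply Rmin_pos; [lra| apply Rdiv_lt_0_compat; lra]).
  assert (He1: e <= 1) by apply Rmin_l.
  assert (He2: e * (1 + Rabs a + Rabs b) <= eps/2).
  { assert (e <= eps / (2 * (1 + Rabs a + Rabs b))) by apply Rmin_r.
    apply Rmult_le_compat_r with (r := 1 + Rabs a + Rabs b) in H; [|lra].
    replace (eps / (2 * (1 + Rabs a + Rabs b)) * (1 + Rabs a + Rabs b)) with (eps/2) in H by (field; lra).
    exact H. }
  destruct (H1 z t e He0) as [d1 [Hd1 H1']].
  destruct (H2 z t e He0) as [d2 [Hd2 H2']].
  exists (Rmin d1 d2); split; [apply Rmin_pos; auto|].
  intros z' t' Hz Ht. unfold fmul.
  assert (A1: Rabs (F z' t' - a) < e).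
  { apply H1'. intros; eapply Rlt_le_trans; [apply Hz; auto| apply Rmin_l].
    eapply Rlt_le_trans; [apply Ht| apply Rmin_l]. }
  assert (A2: Rabs (G z' t' - b) < e).
  { apply H2'. intros; eapply Rlt_le_trans; [apply Hz; auto| apply Rmin_r].
    eapply Rlt_le_trans; [apply Ht| apply Rmin_r]. }
  fold a b.
  replace (F z' t' * G z' t' - a * b) with ((F z' t' - a) * (G z' t' - b) + a * (G z' t' - b) + b * (F z' t' - a)) by ring.
  set (u := F z' t' - a) in *. set (v := G z' t' - b) in *.
  assert (Rabs (u * v + a * v + b * u) <= Rabs u * Rabs v + Rabs a * Rabs v + Rabs b * Rabs u).
  { eapply Rle_trans; [apply Rabs_triang|]. rewrite !Rabs_mult.
    pose proof (Rabs_triang (u*v) (a*v)). rewrite !Rabs_mult in H. lra. }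
  pose proof (Rabs_pos u). pose proof (Rabs_pos v). pose proof (Rabs_pos a). pose proof (Rabs_pos b).
  assert (Rabs u * Rabs v <= e * e) by (apply Rmult_le_compat; lra).
  assert (Rabs a * Rabs v <= Rabs a * e) by (apply Rmult_le_compat_l; lra).
  assert (Rabs b * Rabs u <= Rabs b * e) by (apply Rmult_le_compat_l; lra).
  assert (e * e <= e * 1) by (apply Rmult_le_compat_l; lra).
  nra. Qed.

Lemma jcont_scal l K c F : jcont l K F -> jcont l K (fscal c F).
Proof. intro H. replace (fscal c F) with (fmul (fcst c) F) by reflexivity.
  apply jcont_mul; auto. apply jcont_cst. Qed.

Lemma pds_app ds d F : pds (ds ++ d :: nil) F = pds ds (pd d F).
Proof. unfold pds. rewrite fold_right_app. reflexivity. Qed.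

Lemma pds_plus ds F G : (forall ds', (length ds' < length ds)%nat -> PD (pds ds' F) /\ PD (pds ds' G)) ->
  pds ds (fplus F G) = fplus (pds ds F) (pds ds G).
Proof. induction ds as [|d ds IH]; intro H; [reflexivity|].
  simpl. change (pd d (pds ds (fplus F G)) = fplus (pd d (pds ds F)) (pd d (pds ds G))).
  rewrite IH. 2:{ intros; apply H; simpl; lia. }
  destruct (H ds) as [A B]; [simpl; lia|]. apply pd_plus; auto. Qed.

Lemma pds_scal ds c F : (forall ds', (length ds' < length ds)%nat -> PD (pds ds' F)) ->
  pds ds (fscal c F) = fscal c (pds ds F).
Proof. induction ds as [|d ds IH]; intro H; [reflexivity|].
  simpl. change (pd d (pds ds (fscal c F)) = fscal c (pd d (pds ds F))).
  rewrite IH. 2:{ intros; apply H; simpl; lia. }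
  apply pd_scal; apply H; simpl; lia. Qed.

Lemma pds_cst ds c : exists c', pds ds (fcst c) = fcst c'.
Proof. induction ds as [|d ds IH]; [exists c; reflexivity|].
  destruct IH as [c' E]. exists 0. simpl. change (pd d (pds ds (fcst c)) = fcst 0).
  rewrite E. apply pd_cst. Qed.

Lemma pds_coord ds j i : pds ds (coord j i) = coord j i \/ exists c, pds ds (coord j i) = fcst c.
Proof. induction ds as [|d ds IH]; [left; reflexivity|]. right.
  simpl. change (exists c, pd d (pds ds (coord j i)) = fcst c).
  destruct IH as [E|[c E]]; rewrite E.
  - eexists; apply pd_coord.
  - eexists; apply pd_cst. Qed.

Definition Lev l K n F := forall ds, (length ds <= n)%nat -> PD (pds ds F) /\ jcont l K (pds ds F).

Lemma Lev_down l K n F : Lev l K (S n) F -> Lev l K n F.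
Proof. intros H ds Hl. apply H; lia. Qed.

Lemma Lev_plus l K n F G : Lev l K n F -> Lev l K n G -> Lev l K n (fplus F G).
Proof. intros H1 H2 ds Hl. rewrite pds_plus.
  2:{ intros ds' Hl'. split; [apply H1|apply H2]; lia. }
  destruct (H1 ds Hl), (H2 ds Hl). split; [apply PD_plus|apply jcont_plus]; auto. Qed.

Lemma Lev_scal l K n c F : Lev l K n F -> Lev l K n (fscal c F).
Proof. intros H1 ds Hl. rewrite pds_scal.
  2:{ intros ds' Hl'. apply H1; lia. }
  destruct (H1 ds Hl). split; [apply PD_scal|apply jcont_scal]; auto. Qed.

Lemma Lev_cst l K n c : Lev l K n (fcst c).
Proof. intros ds _. destruct (pds_cst ds c) as [c' E]. rewrite E.
  split; [apply PD_cst|apply jcont_cst]. Qed.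

Lemma Lev_coord l K n j i : (j <= K)%nat -> (i < l)%nat -> Lev l K n (coord j i).
Proof. intros Hj Hi ds _. destruct (pds_coord ds j i) as [E|[c E]]; rewrite E.
  - split; [apply PD_coord|apply jcont_coord; auto].
  - split; [apply PD_cst|apply jcont_cst]. Qed.

Lemma Lev_pd l K n d F : Lev l K (S n) F -> Lev l K n (pd d F).
Proof. intros H ds Hl. rewrite <- pds_app. apply H. rewrite length_app; simpl; lia. Qed.

Lemma Lev_mul l K n : forall F G, Lev l K n F -> Lev l K n G -> Lev l K n (fmul F G).
Proof.
  induction n as [|n IH]; intros F G H1 H2 ds Hl.
  - destruct ds; [|simpl in Hl; lia].
    destruct (H1 nil), (H2 nil); simpl; auto. split; [apply PD_mul|apply jcont_mul]; auto.
  - destruct ds as [|d0 ds0] eqn:Eds.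
    + destruct (H1 nil), (H2 nil); simpl; try lia. split; [apply PD_mul|apply jcont_mul]; auto.
    + rewrite <- Eds in *. assert (Hne: ds <> nil) by (rewrite Eds; discriminate).
      destruct (exists_last Hne) as [ds' [d E]]. rewrite E in Hl |- *.
      rewrite pds_app. rewrite length_app in Hl; simpl in Hl.
      destruct (H1 nil), (H2 nil); simpl; try lia.
      rewrite pd_mul; auto.
      apply (Lev_plus l K n).
      * apply IH; [apply Lev_pd; auto| apply Lev_down; auto].
      * apply IH; [apply Lev_down; auto| apply Lev_pd; auto].
      * lia.
Qed.

Lemma smooth_iff l K F : smooth l K F <-> depends_upto l K F /\ forall n, Lev l K n F.
Proof. unfold smooth, Lev, PD. split.
  - intros [A B]. split; auto.
  - intros [A B]. split; auto. intro ds. apply (B (length ds)). lia. Qed.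

Lemma smooth_PD l K F : smooth l K F -> PD F.
Proof. intros [_ H]. destruct (H nil) as [A _]. exact A. Qed.
Lemma smooth_dep l K F : smooth l K F -> depends_upto l K F.
Proof. intros [H _]. exact H. Qed.

Lemma smooth_mono l K K' F : (K <= K')%nat -> smooth l K F -> smooth l K' F.
Proof. intros HK [A B]. split; [eapply dep_mono; eauto|].
  intro ds; destruct (B ds); split; auto. eapply jcont_mono; eauto. Qed.

Lemma smooth_plus l K F G : smooth l K F -> smooth l K G -> smooth l K (fplus F G).
Proof. rewrite !smooth_iff. intros [A B] [C D]. split; [apply dep_plus; auto|].
  intro n. apply Lev_plus; auto. Qed.
Lemma smooth_mul l K F G : smooth l K F -> smooth l K G -> smooth l K (fmul F G).
Proof. rewrite !smooth_iff. intros [A B] [C D]. split; [apply dep_mul; auto|].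
  intro n. apply Lev_mul; auto. Qed.
Lemma smooth_scal l K c F : smooth l K F -> smooth l K (fscal c F).
Proof. rewrite !smooth_iff. intros [A B]. split; [apply dep_scal; auto|].
  intro n. apply Lev_scal; auto. Qed.
Lemma smooth_cst l K c : smooth l K (fcst c).
Proof. rewrite !smooth_iff. split; [apply dep_cst|]. intro n. apply Lev_cst. Qed.
Lemma smooth_coord l K j i : (j <= K)%nat -> (i < l)%nat -> smooth l K (coord j i).
Proof. intros. rewrite !smooth_iff. split; [apply dep_coord; auto|]. intro n. apply Lev_coord; auto. Qed.
Lemma smooth_pd l K d F : smooth l K F -> smooth l K (pd d F).
Proof. intro H. pose proof (smooth_PD _ _ _ H). rewrite !smooth_iff in *. destruct H as [A B].
  split; [apply dep_pd; auto|]. intro n. apply Lev_pd; auto. Qed.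
Lemma smooth_fsumF l K n f : (forall a, (a < n)%nat -> smooth l K (f a)) -> smooth l K (fsumF n f).
Proof. induction n; intros H.
  - rewrite fsumF_0. apply smooth_cst.
  - rewrite fsumF_S. apply smooth_plus; auto. Qed.

Definition setz (d:Dir) (z:Jet) (x:R) : Jet := match d with DirT => z | DirQ j i => upd z j i x end.
Definition sett (d:Dir) (t x:R) : R := match d with DirT => x | _ => t end.
Definition dist (d1 d2 : Dir) : Prop :=
  match d1, d2 with DirT, DirT => False | DirQ j i, DirQ j' i' => j <> j' \/ i <> i' | _, _ => True end.

Lemma lin_set d F z t : lin d F z t = fun x => F (setz d z x) (sett d t x).
Proof. destruct d; reflexivity. Qed.

Ltac upd_tac := unfold upd; repeat match goal with
  | |- context [Nat.eqb ?a ?b] => let E := fresh "E" in destruct (Nat.eqb a b) eqn:E;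
       [apply Nat.eqb_eq in E | apply Nat.eqb_neq in E] end; simpl; try subst; try lia; auto.

Lemma upd_over z j i x y : upd (upd z j i x) j i y = upd z j i y.
Proof. extensionality a; extensionality b. upd_tac. Qed.
Lemma upd_comm z j i x j' i' y : j <> j' \/ i <> i' ->
  upd (upd z j i x) j' i' y = upd (upd z j' i' y) j i x.
Proof. intro H. extensionality a; extensionality b. upd_tac. Qed.
Lemma upd_get z j i x : upd z j i x j i = x.
Proof. upd_tac. Qed.
Lemma upd_get_other z j i x j' i' : j <> j' \/ i <> i' -> upd z j i x j' i' = z j' i'.
Proof. intro H. upd_tac. Qed.

Definition Pz d1 d2 z u v := setz d2 (setz d1 z u) v.
Definition Pt d1 d2 (t:R) u v := sett d2 (sett d1 t u) v.

Lemma F1z d1 d2 z u v w : dist d1 d2 -> setz d1 (Pz d1 d2 z u v) w = Pz d1 d2 z w v.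
Proof. unfold Pz. destruct d1 as [|j i], d2 as [|j' i']; simpl; intro H; try tauto; try reflexivity.
  - apply upd_over.
  - rewrite (upd_comm (upd z j i u) j' i' v j i w) by (destruct H; [left|right]; congruence).
    rewrite upd_over. reflexivity. Qed.
Lemma F1t d1 d2 t u v w : dist d1 d2 -> sett d1 (Pt d1 d2 t u v) w = Pt d1 d2 t w v.
Proof. unfold Pt. destruct d1 as [|j i], d2 as [|j' i']; simpl; intro H; try tauto; reflexivity. Qed.
Lemma F2z d1 d2 z u v w : setz d2 (Pz d1 d2 z u v) w = Pz d1 d2 z u w.
Proof. unfold Pz. destruct d2; simpl; [reflexivity| apply upd_over]. Qed.
Lemma F2t d1 d2 t u v w : sett d2 (Pt d1 d2 t u v) w = Pt d1 d2 t u w.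
Proof. unfold Pt. destruct d2; reflexivity. Qed.
Lemma F3a d1 d2 z t u v : dist d1 d2 -> getd d1 (Pz d1 d2 z u v) (Pt d1 d2 t u v) = u.
Proof. unfold Pz, Pt. destruct d1 as [|j i], d2 as [|j' i']; simpl; intro H; try tauto; try reflexivity.
  - apply upd_get.
  - rewrite upd_get_other by (destruct H; [left|right]; congruence). apply upd_get. Qed.
Lemma F3b d1 d2 z t u v : getd d2 (Pz d1 d2 z u v) (Pt d1 d2 t u v) = v.
Proof. unfold Pz, Pt. destruct d2 as [|j' i']; simpl; [reflexivity| apply upd_get]. Qed.
Lemma F0 d1 d2 z t : dist d1 d2 ->
  Pz d1 d2 z (getd d1 z t) (getd d2 z t) = z /\ Pt d1 d2 t (getd d1 z t) (getd d2 z t) = t.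
Proof. unfold Pz, Pt. destruct d1 as [|j i], d2 as [|j' i']; simpl; intro H; try tauto;
  rewrite ?upd_same; auto. Qed.

Lemma LD1 d1 d2 G z t u v : dist d1 d2 -> PD G ->
  is_derive (fun w => G (Pz d1 d2 z w v) (Pt d1 d2 t w v)) u (pd d1 G (Pz d1 d2 z u v) (Pt d1 d2 t u v)).
Proof. intros Hd HG. apply is_derive_Reals.
  pose proof (pd_ok G d1 (Pz d1 d2 z u v) (Pt d1 d2 t u v) HG) as H.
  rewrite has_pd_lin, lin_set, F3a in H by auto.
  assert (E: (fun x => G (setz d1 (Pz d1 d2 z u v) x) (sett d1 (Pt d1 d2 t u v) x))
     = (fun w => G (Pz d1 d2 z w v) (Pt d1 d2 t w v))).
  { extensionality x. rewrite F1z, F1t by auto. reflexivity. }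
  rewrite E in H. exact H. Qed.

Lemma LD2 d1 d2 G z t u v : PD G ->
  is_derive (fun w => G (Pz d1 d2 z u w) (Pt d1 d2 t u w)) v (pd d2 G (Pz d1 d2 z u v) (Pt d1 d2 t u v)).
Proof. intros HG. apply is_derive_Reals.
  pose proof (pd_ok G d2 (Pz d1 d2 z u v) (Pt d1 d2 t u v) HG) as H.
  rewrite has_pd_lin, lin_set, F3b in H.
  assert (E: (fun x => G (setz d2 (Pz d1 d2 z u v) x) (sett d2 (Pt d1 d2 t u v) x))
     = (fun w => G (Pz d1 d2 z u w) (Pt d1 d2 t u w))).
  { extensionality x. rewrite F2z, F2t. reflexivity. }
  rewrite E in H. exact H. Qed.

Lemma setz_close d z t x j i : Rabs (setz d z x j i - z j i) <= Rabs (x - getd d z t).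
Proof. destruct d as [|j' i']; simpl.
  - rewrite Rminus_diag, Rabs_R0. apply Rabs_pos.
  - unfold upd. destruct (andb (Nat.eqb j j') (Nat.eqb i i')) eqn:E.
    + apply Bool.andb_true_iff in E. destruct E as [E1 E2]. apply Nat.eqb_eq in E1, E2. subst. lra.
    + rewrite Rminus_diag, Rabs_R0. apply Rabs_pos. Qed.
Lemma sett_close d z t x : Rabs (sett d t x - t) <= Rabs (x - getd d z t).
Proof. destruct d; simpl.
  - lra.
  - rewrite Rminus_diag, Rabs_R0. apply Rabs_pos. Qed.

Lemma getd2_after d1 d2 z t u : dist d1 d2 -> getd d2 (setz d1 z u) (sett d1 t u) = getd d2 z t.
Proof. destruct d1 as [|j i], d2 as [|j' i']; simpl; intro H; try tauto; try reflexivity.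
  apply upd_get_other; destruct H; [left|right]; congruence. Qed.

Lemma cont2d l K G d1 d2 z t : dist d1 d2 -> jcont l K G ->
  continuity_2d_pt (fun u v => G (Pz d1 d2 z u v) (Pt d1 d2 t u v)) (getd d1 z t) (getd d2 z t).
Proof. intros Hd HG eps.
  destruct (F0 d1 d2 z t Hd) as [E1 E2]. rewrite E1, E2.
  destruct (HG z t eps (cond_pos eps)) as [del [Hdel H]].
  assert (Hd2: 0 < del/2) by lra.
  exists (mkposreal _ Hd2). simpl. intros u v Hu Hv.
  apply H.
  - intros j i _ _. unfold Pz.
    eapply Rle_lt_trans.
    { replace (setz d2 (setz d1 z u) v j i - z j i) with
        ((setz d2 (setz d1 z u) v j i - setz d1 z u j i) + (setz d1 z u j i - z j i)) by ring.
      apply Rabs_triang. }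
    pose proof (setz_close d2 (setz d1 z u) (sett d1 t u) v j i) as A.
    pose proof (setz_close d1 z t u j i) as B.
    rewrite getd2_after in A by auto. lra.
  - unfold Pt. eapply Rle_lt_trans.
    { replace (sett d2 (sett d1 t u) v - t) with
        ((sett d2 (sett d1 t u) v - sett d1 t u) + (sett d1 t u - t)) by ring.
      apply Rabs_triang. }
    pose proof (sett_close d2 (setz d1 z u) (sett d1 t u) v) as A.
    pose proof (sett_close d1 z t u) as B.
    rewrite getd2_after in A by auto. lra.
Qed.

Lemma smooth_jcont l K F : smooth l K F -> jcont l K F.
Proof. intros [_ H]. destruct (H nil) as [_ A]. exact A. Qed.

Lemma schwarz_dist l K F d1 d2 : dist d1 d2 -> smooth l K F ->
  pd d1 (pd d2 F) = pd d2 (pd d1 F).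
Proof.
  intros Hd HF. extensionality z; extensionality t.
  assert (P0: PD F) by (eapply smooth_PD; eauto).
  assert (P1: PD (pd d1 F)) by (eapply smooth_PD, smooth_pd; eauto).
  assert (P2: PD (pd d2 F)) by (eapply smooth_PD, smooth_pd; eauto).
  set (f := fun u v => F (Pz d1 d2 z u v) (Pt d1 d2 t u v)).
  assert (Ea: forall u v, Derive (fun s => f u s) v = pd d2 F (Pz d1 d2 z u v) (Pt d1 d2 t u v)).
  { intros; apply is_derive_unique, LD2; auto. }
  assert (Eb: forall u v, Derive (fun s => f s v) u = pd d1 F (Pz d1 d2 z u v) (Pt d1 d2 t u v)).
  { intros; apply is_derive_unique, LD1; auto. }
  assert (Ec: forall u v, Derive (fun w => Derive (fun s => f w s) v) u
      = pd d1 (pd d2 F) (Pz d1 d2 z u v) (Pt d1 d2 t u v)).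
  { intros. assert (E: (fun w => Derive (fun s => f w s) v) = (fun w => pd d2 F (Pz d1 d2 z w v) (Pt d1 d2 t w v))).
    { extensionality w. apply Ea. }
    rewrite E. apply is_derive_unique, LD1; auto. }
  assert (Ed: forall u v, Derive (fun w => Derive (fun s => f s w) u) v
      = pd d2 (pd d1 F) (Pz d1 d2 z u v) (Pt d1 d2 t u v)).
  { intros. assert (E: (fun w => Derive (fun s => f s w) u) = (fun w => pd d1 F (Pz d1 d2 z u w) (Pt d1 d2 t u w))).
    { extensionality w. apply Eb. }
    rewrite E. apply is_derive_unique, LD2; auto. }
  pose proof (Schwarz f (getd d1 z t) (getd d2 z t)) as S.
  rewrite Ec, Ed in S. destruct (F0 d1 d2 z t Hd) as [E1 E2]. rewrite E1, E2 in S.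
  apply S.
  - exists (mkposreal 1 Rlt_0_1). intros u v _ _. split; [|split; [|split]].
    + eexists. apply LD1; auto.
    + eexists. apply LD2; auto.
    + assert (E: (fun w => Derive (fun s => f w s) v) = (fun w => pd d2 F (Pz d1 d2 z w v) (Pt d1 d2 t w v))).
      { extensionality w. apply Ea. }
      rewrite E. eexists. apply LD1; auto.
    + assert (E: (fun w => Derive (fun s => f s w) u) = (fun w => pd d1 F (Pz d1 d2 z u w) (Pt d1 d2 t u w))).
      { extensionality w. apply Eb. }
      rewrite E. eexists. apply LD2; auto.
  - assert (E: (fun u v => Derive (fun w => Derive (fun s => f w s) v) u)
        = (fun u v => pd d1 (pd d2 F) (Pz d1 d2 z u v) (Pt d1 d2 t u v))).
    { extensionality u; extensionality v. apply Ec. }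
    rewrite E. apply (cont2d l K); auto. apply smooth_jcont with (K:=K). apply smooth_pd, smooth_pd; auto.
  - assert (E: (fun u v => Derive (fun w => Derive (fun s => f s w) u) v)
        = (fun u v => pd d2 (pd d1 F) (Pz d1 d2 z u v) (Pt d1 d2 t u v))).
    { extensionality u; extensionality v. apply Ed. }
    rewrite E. apply (cont2d l K); auto. apply smooth_jcont with (K:=K). apply smooth_pd, smooth_pd; auto.
Qed.

Lemma schwarz l K F d1 d2 : smooth l K F -> pd d1 (pd d2 F) = pd d2 (pd d1 F).
Proof. intro HF.
  destruct d1 as [|j i], d2 as [|j' i'].
  - reflexivity.
  - apply (schwarz_dist l K); simpl; auto.
  - apply (schwarz_dist l K); simpl; auto.
  - destruct (Nat.eq_dec j j'); [destruct (Nat.eq_dec i i')|]; try (subst; reflexivity);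
    apply (schwarz_dist l K); simpl; auto. Qed.

Lemma fsum_ext n f g : (forall a, (a < n)%nat -> f a = g a) -> fsum n f = fsum n g.
Proof. induction n; intro H; simpl; auto. rewrite IHn, H; auto. Qed.
Lemma fsum_plus n f g : fsum n (fun a => f a + g a) = fsum n f + fsum n g.
Proof. induction n; simpl; [ring|]. rewrite IHn; ring. Qed.
Lemma fsum_scal n c f : fsum n (fun a => c * f a) = c * fsum n f.
Proof. induction n; simpl; [ring|]. rewrite IHn; ring. Qed.
Lemma fsum_scal_r n c f : fsum n (fun a => f a * c) = fsum n f * c.
Proof. induction n; simpl; [ring|]. rewrite IHn; ring. Qed.
Lemma fsum_opp n f : fsum n (fun a => - f a) = - fsum n f.
Proof. induction n; simpl; [ring|]. rewrite IHn; ring. Qed.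
Lemma fsum_zero n : fsum n (fun _ => 0) = 0.
Proof. induction n; simpl; [ring|]. rewrite IHn; ring. Qed.
Lemma fsum_tail n M g : (n <= M)%nat -> (forall a, (n <= a < M)%nat -> g a = 0) -> fsum M g = fsum n g.
Proof. induction M; intros H1 H2.
  - assert (n = 0%nat) by lia. subst. reflexivity.
  - destruct (Nat.eq_dec n (S M)); [subst; reflexivity|].
    simpl. rewrite H2 by lia. rewrite IHM; [ring|lia|]. intros; apply H2; lia. Qed.
Lemma fsum_delta n a f : fsum n (fun b => if Nat.eqb b a then f b else 0) = if Nat.ltb a n then f a else 0.
Proof. induction n; simpl; [reflexivity|]. rewrite IHn.
  destruct (Nat.eqb_spec n a); destruct (Nat.ltb_spec a n); destruct (Nat.ltb_spec a (S n));
  subst; try lia; ring. Qed.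
Lemma fsum_comm n m f : fsum n (fun a => fsum m (fun b => f a b)) = fsum m (fun b => fsum n (fun a => f a b)).
Proof. induction n; simpl.
  - rewrite fsum_zero; reflexivity.
  - rewrite IHn, <- fsum_plus. reflexivity. Qed.

Lemma has_pd_fsumF d n f z t v : (forall a, (a < n)%nat -> has_pd d (f a) z t (v a)) ->
  has_pd d (fsumF n f) z t (fsum n v).
Proof. induction n; intro H.
  - rewrite fsumF_0. apply has_pd_cst.
  - rewrite fsumF_S. apply has_pd_plus; auto. Qed.

Lemma least_ex (P : nat -> Prop) n : P n -> exists m, P m /\ forall k, P k -> (m <= k)%nat.
Proof. revert P. induction n as [n IH] using Wf_nat.lt_wf_ind. intros P Hn.
  destruct (classic (exists k, (k < n)%nat /\ P k)) as [[k [Hk Pk]]|Hno].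
  - apply (IH k Hk P Pk).
  - exists n. split; auto. intros k Pk. destruct (Compare_dec.le_lt_dec n k); auto.
    exfalso; apply Hno; eauto. Qed.

Lemma jorder_spec l K F : depends_upto l K F -> depends_upto l (jorder l F) F /\ (jorder l F <= K)%nat.
Proof. intro H. unfold jorder.
  pose proof (epsilon_spec (inhabits 0%nat) (fun K => depends_upto l K F /\ forall K', depends_upto l K' F -> (K <= K')%nat)) as E.
  destruct E as [A B].
  - apply (least_ex _ K H).
  - split; auto. Qed.

Definition tdK l M F : JF :=
  fplus (pd DirT F) (fsumF M (fun j => fsumF l (fun i => fmul (pd (DirQ j i) F) (coord (S j) i)))).

Lemma tder_K l K M F : depends_upto l K F -> (S K <= M)%nat -> tder l F = tdK l M F.
Proof. intros H HM. destruct (jorder_spec l K F H) as [HJ HJK].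
  extensionality z; extensionality t. unfold tder, tdK, fplus, fsumF, fmul, coord, pdt, pdq.
  f_equal. symmetry. apply fsum_tail; [lia|]. intros a Ha.
  rewrite <- (fsum_zero l). apply fsum_ext. intros i Hi.
  rewrite (pd_irrel l (jorder l F) F a i) by (auto; lia). unfold fcst. ring. Qed.

Lemma tdK_val l M F z t : tdK l M F z t =
  pd DirT F z t + fsum M (fun j => fsum l (fun i => pd (DirQ j i) F z t * z (S j) i)).
Proof. reflexivity. Qed.

Lemma tdK_lin l M H F G (A B : JF) :
  (forall d z t, pd d H z t = A z t * pd d F z t + B z t * pd d G z t) ->
  forall z t, tdK l M H z t = A z t * tdK l M F z t + B z t * tdK l M G z t.
Proof. intros E z t. rewrite !tdK_val, E.
  rewrite (fsum_ext M _ (fun j => A z t * fsum l (fun i => pd (DirQ j i) F z t * z (S j) i)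
                              + B z t * fsum l (fun i => pd (DirQ j i) G z t * z (S j) i))).
  - rewrite fsum_plus, !fsum_scal. ring.
  - intros j Hj. rewrite <- !fsum_scal, <- fsum_plus. apply fsum_ext. intros i Hi.
    rewrite E. ring. Qed.

Lemma tder_smooth l K F : smooth l K F -> smooth l (S K) (tder l F).
Proof. intro HF. rewrite (tder_K l K (S K)) by (auto; apply smooth_dep in HF; auto).
  unfold tdK. apply smooth_plus.
  - apply smooth_mono with K; [lia|]. apply smooth_pd; auto.
  - apply smooth_fsumF; intros j Hj; apply smooth_fsumF; intros i Hi. apply smooth_mul.
    + apply smooth_mono with K; [lia|]. apply smooth_pd; auto.
    + apply smooth_coord; lia. Qed.

Lemma tder_smooth_le l K K' F : smooth l K F -> (S K <= K')%nat -> smooth l K' (tder l F).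
Proof. intros. apply smooth_mono with (S K); auto. apply tder_smooth; auto. Qed.

Ltac tdK3 l K H1 H2 H3 :=
  rewrite (tder_K l K (S K) _ H1), (tder_K l K (S K) _ H2), (tder_K l K (S K) _ H3) by lia.

Lemma pdv_plus d F G z t : PD F -> PD G -> pd d (fplus F G) z t = pd d F z t + pd d G z t.
Proof. intros. rewrite pd_plus; auto. Qed.
Lemma pdv_mul d F G z t : PD F -> PD G -> pd d (fmul F G) z t = pd d F z t * G z t + F z t * pd d G z t.
Proof. intros. rewrite pd_mul; auto. Qed.
Lemma pdv_scal d c F z t : PD F -> pd d (fscal c F) z t = c * pd d F z t.
Proof. intros. rewrite pd_scal; auto. Qed.

Lemma tder_plus l K F G : smooth l K F -> smooth l K G -> tder l (fplus F G) = fplus (tder l F) (tder l G).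
Proof. intros HF HG.
  rewrite (tder_K l K (S K) (fplus F G)), (tder_K l K (S K) F), (tder_K l K (S K) G);
    try apply smooth_dep; try apply smooth_plus; auto.
  extensionality z; extensionality t.
  rewrite (tdK_lin l (S K) (fplus F G) F G (fcst 1) (fcst 1)).
  - unfold fcst, fplus; ring.
  - intros. rewrite pdv_plus by (eapply smooth_PD; eauto). unfold fcst; ring. Qed.

Lemma tder_mul l K F G : smooth l K F -> smooth l K G ->
  tder l (fmul F G) = fplus (fmul (tder l F) G) (fmul F (tder l G)).
Proof. intros HF HG.
  rewrite (tder_K l K (S K) (fmul F G)), (tder_K l K (S K) F), (tder_K l K (S K) G);
    try apply smooth_dep; try apply smooth_mul; auto.
  extensionality z; extensionality t.
  rewrite (tdK_lin l (S K) (fmul F G) F G G F).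
  - unfold fplus, fmul. ring.
  - intros. rewrite pdv_mul by (eapply smooth_PD; eauto). ring. Qed.

Lemma tder_scal l K c F : smooth l K F -> tder l (fscal c F) = fscal c (tder l F).
Proof. intros HF.
  rewrite (tder_K l K (S K) (fscal c F)), (tder_K l K (S K) F);
    try apply smooth_dep; try apply smooth_scal; auto.
  extensionality z; extensionality t.
  rewrite (tdK_lin l (S K) (fscal c F) F F (fcst c) (fcst 0)).
  - unfold fcst, fscal; ring.
  - intros. rewrite pdv_scal by (eapply smooth_PD; eauto). unfold fcst; ring. Qed.

Lemma tder_cst l c : tder l (fcst c) = fcst 0.
Proof.
  rewrite (tder_K l 0 1 (fcst c)) by (auto; apply dep_cst).
  extensionality z; extensionality t.
  rewrite (tdK_lin l 1 (fcst c) (fcst c) (fcst c) (fcst 0) (fcst 0)).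
  - unfold fcst; ring.
  - intros. rewrite pd_cst. unfold fcst; ring. Qed.

Lemma tder_fsumF l K n f : (forall a, (a < n)%nat -> smooth l K (f a)) ->
  tder l (fsumF n f) = fsumF n (fun a => tder l (f a)).
Proof. induction n; intro H.
  - rewrite !fsumF_0. apply tder_cst.
  - rewrite !fsumF_S. rewrite (tder_plus l K); auto.
    + rewrite IHn; auto.
    + apply smooth_fsumF; auto. Qed.

Lemma fsum_zero_ext n f : (forall a, (a < n)%nat -> f a = 0) -> fsum n f = 0.
Proof. intro H. rewrite (fsum_ext n f (fun _ => 0)) by auto. apply fsum_zero. Qed.

Lemma inner_delta l j i j' (g : nat -> R) : (i < l)%nat ->
  fsum l (fun i' => g i' * deltad (DirQ j i) (S j') i') = if Nat.eqb (S j') j then g i else 0.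
Proof. intro Hi. unfold deltad. destruct (Nat.eqb (S j') j); cbn [andb].
  - rewrite (fsum_ext l _ (fun i' => if Nat.eqb i' i then g i' else 0)).
    + rewrite fsum_delta. destruct (Nat.ltb_spec i l); [reflexivity|lia].
    + intros a Ha. destruct (Nat.eqb a i); ring.
  - apply fsum_zero_ext. intros. ring. Qed.

Lemma outer_delta l K F M j i z t : depends_upto l K F -> (S K <= M)%nat ->
  fsum M (fun j' => if Nat.eqb (S j') j then pd (DirQ j' i) F z t else 0) =
  match j with O => 0 | S j'' => pd (DirQ j'' i) F z t end.
Proof. intros H HM. destruct j as [|j''].
  - apply fsum_zero_ext. intros; reflexivity.
  - rewrite (fsum_ext M _ (fun j' => if Nat.eqb j' j'' then pd (DirQ j' i) F z t else 0))
      by (intros; reflexivity).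
    rewrite fsum_delta. destruct (Nat.ltb_spec j'' M); [reflexivity|].
    rewrite (pd_irrel l K F j'' i H) by lia. reflexivity. Qed.

Definition predterm (j i : nat) (F : JF) : JF :=
  match j with O => fcst 0 | S j' => pd (DirQ j' i) F end.

Lemma pdq_tder l K F j i : smooth l K F -> (i < l)%nat ->
  pd (DirQ j i) (tder l F) = fplus (tder l (pd (DirQ j i) F)) (predterm j i F).
Proof. intros HF Hi.
  assert (HD: depends_upto l K F) by (apply smooth_dep; auto).
  assert (HP: PD F) by (eapply smooth_PD; eauto).
  assert (HPp: forall d, PD (pd d F)) by (intro; eapply smooth_PD, smooth_pd; eauto).
  rewrite (tder_K l K (S K) F) by (auto; lia).
  rewrite (tder_K l K (S K) (pd (DirQ j i) F)) by (auto; apply dep_pd; auto).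
  extensionality z; extensionality t.
  unfold tdK at 1.
  erewrite pd_spec.
  2:{ apply has_pd_plus; [apply pd_ok; apply HPp|].
      apply has_pd_fsumF; intros j' Hj'; apply has_pd_fsumF; intros i' Hi'.
      apply has_pd_mul; [apply pd_ok; apply HPp| apply has_pd_coord]. }
  unfold fplus. rewrite tdK_val.
  rewrite (schwarz l K F (DirQ j i) DirT HF).
  rewrite (fsum_ext (S K) _ (fun j' => fsum l (fun i' => pd (DirQ j' i') (pd (DirQ j i) F) z t * z (S j') i')
        + (if Nat.eqb (S j') j then pd (DirQ j' i) F z t else 0))).
  - rewrite fsum_plus, (outer_delta l K F (S K) j i z t HD) by lia.
    unfold predterm. destruct j; unfold fcst; ring.
  - intros j' Hj'. rewrite <- (inner_delta l j i j' (fun i' => pd (DirQ j' i') F z t)) by auto.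
    rewrite <- fsum_plus. apply fsum_ext. intros i' Hi'.
    rewrite (schwarz l K F (DirQ j i) (DirQ j' i') HF). unfold coord. ring.
Qed.

Lemma fplus_0l G : fplus (fcst 0) G = G.
Proof. extensionality z; extensionality t. unfold fplus, fcst. ring. Qed.
Lemma fplus_0r G : fplus G (fcst 0) = G.
Proof. extensionality z; extensionality t. unfold fplus, fcst. ring. Qed.

Lemma tdern_S l m F : tdern l (S m) F = tder l (tdern l m F).
Proof. reflexivity. Qed.

Lemma tdern_smooth l K m F : smooth l K F -> smooth l (m + K) (tdern l m F).
Proof. intro H. induction m; [exact H|]. change (S m + K)%nat with (S (m + K)). rewrite tdern_S. apply tder_smooth; auto. Qed.

Lemma Op_plus l K r A B k z t : smooth l K A -> smooth l K B ->
  Op l r (fplus A B) k z t = Op l r A k z t + Op l r B k z t.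
Proof. intros HA HB. unfold Op, pdq.
  rewrite !pd_plus by (eapply smooth_PD; eauto).
  rewrite (tder_plus l K) by (apply smooth_pd; auto). unfold fplus. ring. Qed.

Lemma Op_scal l K r c A k z t : smooth l K A ->
  Op l r (fscal c A) k z t = c * Op l r A k z t.
Proof. intros HA. unfold Op, pdq.
  rewrite !pd_scal by (eapply smooth_PD; eauto).
  rewrite (tder_scal l K) by (apply smooth_pd; auto). unfold fscal. ring. Qed.

Lemma Op_tder l p Y k z t : smooth l (S p) Y -> (k < l)%nat ->
  Op l (S p) (tder l Y) k z t = Op l p Y k z t.
Proof. intros HY Hk. unfold Op, pdq.
  rewrite (pdq_tder l (S p) Y (S p) k HY Hk), (pdq_tder l (S p) Y (S (S p)) k HY Hk).
  unfold predterm.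
  rewrite (pd_irrel l (S p) Y (S (S p)) k) by (try apply smooth_dep; auto; lia).
  rewrite tder_cst, fplus_0l. unfold fplus, fcst. rewrite !S_INR. ring. Qed.

Lemma Op_tdern l p Y k : smooth l (S p) Y -> (k < l)%nat ->
  forall m z t, Op l (m + p) (tdern l m Y) k z t = Op l p Y k z t.
Proof. intros HY Hk m. induction m; intros z t; [reflexivity|].
  simpl Nat.add. rewrite tdern_S, Op_tder; auto.
  replace (S (m + p)) with (m + S p)%nat by lia. apply tdern_smooth; auto. Qed.

Lemma Op_tdern' l p r Y k z t : smooth l (S p) Y -> (k < l)%nat -> (p <= r)%nat ->
  Op l r (tdern l (r - p) Y) k z t = Op l p Y k z t.
Proof. intros. replace r with ((r - p) + p)%nat at 1 by lia. apply Op_tdern; auto. Qed.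

Lemma pd_Dm l X k : smooth l 0 X -> (k < l)%nat -> forall m',
  pd (DirQ (S m') k) (tdern l (S m') X) = pd (DirQ 0 k) X /\
  pd (DirQ m' k) (tdern l (S m') X) = fscal (INR (S m')) (tder l (pd (DirQ 0 k) X)).
Proof. intros HX Hk. induction m' as [|m' [IH1 IH2]].
  - rewrite tdern_S. simpl tdern. split.
    + rewrite (pdq_tder l 0 X 1 k HX Hk). unfold predterm.
      rewrite (pd_irrel l 0 X 1 k) by (try apply smooth_dep; auto; lia).
      rewrite tder_cst, fplus_0l. reflexivity.
    + rewrite (pdq_tder l 0 X 0 k HX Hk). unfold predterm. rewrite fplus_0r.
      extensionality z; extensionality t. unfold fscal. simpl. ring.
  - assert (HD: smooth l (S m') (tdern l (S m') X)).
    { replace (S m') with (S m' + 0)%nat at 1 by lia. apply tdern_smooth; auto. }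
    rewrite tdern_S. split.
    + rewrite (pdq_tder l (S m') _ (S (S m')) k HD Hk). unfold predterm.
      rewrite (pd_irrel l (S m') _ (S (S m')) k) by (try apply smooth_dep; auto; lia).
      rewrite tder_cst, fplus_0l. exact IH1.
    + rewrite (pdq_tder l (S m') _ (S m') k HD Hk). unfold predterm.
      rewrite IH1, IH2. extensionality z; extensionality t. unfold fplus, fscal.
      rewrite (S_INR (S m')). ring. Qed.

Lemma has_pd_from_eq d F G z t : PD F -> pd d F = G -> has_pd d F z t (G z t).
Proof. intros HP E. rewrite <- E. apply pd_ok; auto. Qed.

Lemma smooth_X_tdern l X m : smooth l 0 X -> smooth l m (tdern l m X).
Proof. intro H. replace m with (m + 0)%nat at 1 by lia. apply tdern_smooth; auto. Qed.

Ltac PDt := match goal with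
  | |- PD _ => eapply smooth_PD; eauto
  end.

Definition Lagc l n (X : nat -> JF) (m : nat -> R) (U0 : JF) : JF :=
  fplus (fscal (/2) (fsumF n (fun a => fmul (fscal (m a) (tder l (X a))) (tder l (X a))))) U0.

Lemma Lagc_smooth l n X m U0 : (forall a, (a < n)%nat -> smooth l 0 (X a)) -> smooth l 0 U0 ->
  smooth l 1 (Lagc l n X m U0).
Proof. intros HX HU. unfold Lagc. apply smooth_plus; [|apply smooth_mono with 0%nat; auto].
  apply smooth_scal, smooth_fsumF. intros a Ha.
  apply smooth_mul; [apply smooth_scal|]; apply (smooth_X_tdern l (X a) 1); auto. Qed.

Lemma Op_Lag l n X m U0 k z t : (forall a, (a < n)%nat -> smooth l 0 (X a)) -> smooth l 0 U0 -> (k < l)%nat ->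
  Op l 0 (Lagc l n X m U0) k z t =
  pd (DirQ 0 k) U0 z t - fsum n (fun a => pd (DirQ 0 k) (X a) z t * tder l (fscal (m a) (tder l (X a))) z t).
Proof. intros HX HU Hk.
  assert (HXd: forall a, (a < n)%nat -> smooth l 1 (tder l (X a))).
  { intros a Ha. apply (smooth_X_tdern l (X a) 1); auto. }
  assert (S1: pd (DirQ 0 k) (Lagc l n X m U0) z t =
     fsum n (fun a => m a * tder l (X a) z t * tder l (pd (DirQ 0 k) (X a)) z t) + pd (DirQ 0 k) U0 z t).
  { unfold Lagc. erewrite pd_spec.
    2:{ apply has_pd_plus; [|apply pd_ok; PDt].
        apply has_pd_scal, has_pd_fsumF. intros a Ha.
        apply has_pd_mul; [apply has_pd_scal|];
        (apply has_pd_from_eq; [PDt| apply (proj2 (pd_Dm l (X a) k (HX a Ha) Hk 0))]). }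
    f_equal. rewrite <- fsum_scal. apply fsum_ext. intros a Ha. unfold fscal. simpl INR. field. }
  assert (S2: pd (DirQ 1 k) (Lagc l n X m U0) = fsumF n (fun a => fmul (fscal (m a) (tder l (X a))) (pd (DirQ 0 k) (X a)))).
  { extensionality z'; extensionality t'. unfold Lagc. erewrite pd_spec.
    2:{ apply has_pd_plus; [|apply (has_pd_irrel l 0); [apply smooth_dep; auto| lia]].
        apply has_pd_scal, has_pd_fsumF. intros a Ha.
        apply has_pd_mul; [apply has_pd_scal|];
        (apply has_pd_from_eq; [PDt| apply (proj1 (pd_Dm l (X a) k (HX a Ha) Hk 0))]). }
    unfold fsumF. rewrite Rplus_0_r, <- fsum_scal. apply fsum_ext. intros a Ha. unfold fscal, fmul. field. }
  assert (S3: tder l (fsumF n (fun a => fmul (fscal (m a) (tder l (X a))) (pd (DirQ 0 k) (X a)))) z t =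
     fsum n (fun a => tder l (fscal (m a) (tder l (X a))) z t * pd (DirQ 0 k) (X a) z t
                    + m a * tder l (X a) z t * tder l (pd (DirQ 0 k) (X a)) z t)).
  { rewrite (tder_fsumF l 1).
    - unfold fsumF. apply fsum_ext. intros a Ha. rewrite (tder_mul l 1).
      + unfold fplus, fmul, fscal. ring.
      + apply smooth_scal; auto.
      + apply smooth_mono with 0%nat; [lia|]. apply smooth_pd; auto.
    - intros a Ha. apply smooth_mul; [apply smooth_scal; auto|].
      apply smooth_mono with 0%nat; [lia|]. apply smooth_pd; auto. }
  unfold Op, pdq. rewrite S1, S2, S3, fsum_plus. simpl INR.
  replace (fsum n (fun a => pd (DirQ 0 k) (X a) z t * tder l (fscal (m a) (tder l (X a))) z t))
    with (fsum n (fun a => tder l (fscal (m a) (tder l (X a))) z t * pd (DirQ 0 k) (X a) z t))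
    by (apply fsum_ext; intros; ring).
  ring. Qed.

Definition UAc l n (X : nat -> JF) (lam : nat -> R) h : JF :=
  fscal (/2) (fsumF n (fun a => fmul (fscal (lam a) (tdern l h (X a))) (tdern l h (X a)))).

Lemma UAc_smooth l n X lam h : (forall a, (a < n)%nat -> smooth l 0 (X a)) -> smooth l h (UAc l n X lam h).
Proof. intros HX. unfold UAc. apply smooth_scal, smooth_fsumF. intros a Ha.
  apply smooth_mul; [apply smooth_scal|]; apply smooth_X_tdern; auto. Qed.

Lemma Op_UA l n X lam h' k z t : (forall a, (a < n)%nat -> smooth l 0 (X a)) -> (k < l)%nat ->
  Op l h' (UAc l n X lam (S h')) k z t =
  - INR (S h') * fsum n (fun a => pd (DirQ 0 k) (X a) z t * (lam a * tdern l (S (S h')) (X a) z t)).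
Proof. intros HX Hk.
  assert (HD: forall a, (a < n)%nat -> smooth l (S h') (tdern l (S h') (X a))).
  { intros a Ha. apply smooth_X_tdern; auto. }
  assert (S1: pd (DirQ h' k) (UAc l n X lam (S h')) z t =
     fsum n (fun a => lam a * tdern l (S h') (X a) z t * (INR (S h') * tder l (pd (DirQ 0 k) (X a)) z t))).
  { unfold UAc. erewrite pd_spec.
    2:{ apply has_pd_scal, has_pd_fsumF. intros a Ha.
        apply has_pd_mul; [apply has_pd_scal|];
        (apply has_pd_from_eq; [PDt| apply (proj2 (pd_Dm l (X a) k (HX a Ha) Hk h'))]). }
    rewrite <- fsum_scal. apply fsum_ext. intros a Ha. unfold fscal. field. }
  assert (S2: pd (DirQ (S h') k) (UAc l n X lam (S h')) = fsumF n (fun a => fmul (fscal (lam a) (tdern l (S h') (X a))) (pd (DirQ 0 k) (X a)))).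
  { extensionality z'; extensionality t'. unfold UAc. erewrite pd_spec.
    2:{ apply has_pd_scal, has_pd_fsumF. intros a Ha.
        apply has_pd_mul; [apply has_pd_scal|];
        (apply has_pd_from_eq; [PDt| apply (proj1 (pd_Dm l (X a) k (HX a Ha) Hk h'))]). }
    unfold fsumF. rewrite <- fsum_scal. apply fsum_ext. intros a Ha. unfold fscal, fmul. field. }
  assert (S3: tder l (fsumF n (fun a => fmul (fscal (lam a) (tdern l (S h') (X a))) (pd (DirQ 0 k) (X a)))) z t =
     fsum n (fun a => lam a * tdern l (S (S h')) (X a) z t * pd (DirQ 0 k) (X a) z t
                    + lam a * tdern l (S h') (X a) z t * tder l (pd (DirQ 0 k) (X a)) z t)).
  { rewrite (tder_fsumF l (S h')).
    - unfold fsumF. apply fsum_ext. intros a Ha. rewrite (tder_mul l (S h')).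
      + rewrite (tder_scal l (S h')) by auto. change (tder l (tdern l (S h') (X a))) with (tdern l (S (S h')) (X a)). unfold fplus, fmul, fscal. ring.
      + apply smooth_scal; auto.
      + apply smooth_mono with 0%nat; [lia|]. apply smooth_pd; auto.
    - intros a Ha. apply smooth_mul; [apply smooth_scal; auto|].
      apply smooth_mono with 0%nat; [lia|]. apply smooth_pd; auto. }
  unfold Op, pdq. rewrite S1, S2, S3, fsum_plus.
  rewrite (fsum_ext n (fun a => lam a * tdern l (S h') (X a) z t * (INR (S h') * tder l (pd (DirQ 0 k) (X a)) z t))
     (fun a => INR (S h') * (lam a * tdern l (S h') (X a) z t * tder l (pd (DirQ 0 k) (X a)) z t)))
     by (intros; ring).
  rewrite (fsum_ext n (fun a => pd (DirQ 0 k) (X a) z t * (lam a * tdern l (S (S h')) (X a) z t))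
     (fun a => lam a * tdern l (S (S h')) (X a) z t * pd (DirQ 0 k) (X a) z t))
     by (intros; ring).
  rewrite fsum_scal. ring. Qed.

Definition JTc (l n : nat) (X : nat -> JF) (G : nat -> JF) k : JF := fsumF n (fun a => fmul (pd (DirQ 0 k) (X a)) (G a)).
Definition gamc (l n : nat) (X G : nat -> JF) (rho : nat) : JF := fsumF l (fun k' => fmul (JTc l n X G k') (coord rho k')).

Lemma JTc_smooth l n X G K k : (forall a, (a < n)%nat -> smooth l 0 (X a)) ->
  (forall a, (a < n)%nat -> smooth l K (G a)) -> smooth l K (JTc l n X G k).
Proof. intros HX HG. unfold JTc. apply smooth_fsumF. intros a Ha. apply smooth_mul; auto.
  apply smooth_mono with 0%nat; [lia|]. apply smooth_pd; auto. Qed.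

Lemma gamc_smooth l n X G rho : (1 <= rho)%nat -> (forall a, (a < n)%nat -> smooth l 0 (X a)) ->
  (forall a, (a < n)%nat -> smooth l (rho - 1) (G a)) -> smooth l rho (gamc l n X G rho).
Proof. intros Hr HX HG. unfold gamc. apply smooth_fsumF. intros k Hk. apply smooth_mul.
  - apply smooth_mono with (rho - 1)%nat; [lia|]. apply JTc_smooth; auto.
  - apply smooth_coord; lia. Qed.

Lemma Op_gamma l n X G rho k z t : (1 <= rho)%nat -> (forall a, (a < n)%nat -> smooth l 0 (X a)) ->
  (forall a, (a < n)%nat -> smooth l (rho - 1) (G a)) -> (k < l)%nat ->
  Op l rho (gamc l n X G rho) k z t = JTc l n X G k z t.
Proof. intros Hr HX HG Hk.
  assert (HJ: forall k', smooth l (rho - 1) (JTc l n X G k')) by (intro; apply JTc_smooth; auto).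
  unfold Op, pdq.
  rewrite (pd_irrel l rho _ (S rho) k) by (try apply smooth_dep, gamc_smooth; auto; lia).
  rewrite tder_cst. unfold fcst. rewrite Rmult_0_r, Rminus_0_r.
  unfold gamc. erewrite pd_spec.
  2:{ apply has_pd_fsumF. intros k' Hk'. apply has_pd_mul.
      - apply (has_pd_irrel l (rho - 1)); [apply smooth_dep; auto| lia].
      - apply has_pd_coord. }
  rewrite (fsum_ext l _ (fun k' => if Nat.eqb k' k then JTc l n X G k' z t else 0)).
  - rewrite fsum_delta. destruct (Nat.ltb_spec k l); [reflexivity|lia].
  - intros k' Hk'. unfold deltad. rewrite Nat.eqb_refl. simpl andb.
    destruct (Nat.eqb k' k); ring. Qed.

Lemma Op_Rf l sigma Rf k z t : smooth l sigma Rf -> Op l sigma Rf k z t = pd (DirQ sigma k) Rf z t.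
Proof. intro H. unfold Op, pdq.
  rewrite (pd_irrel l sigma _ (S sigma) k) by (try apply smooth_dep; auto; lia).
  rewrite tder_cst. unfold fcst. ring. Qed.

Lemma smooth_tdern_r l p r P : smooth l (S p) P -> (p <= r)%nat -> smooth l (S r) (tdern l (r - p) P).
Proof. intros H Hp. replace (S r) with ((r - p) + S p)%nat by lia. apply tdern_smooth; auto. Qed.

Lemma JT_lin5 n (J A B C D E Q : nat -> R) :
  fsum n (fun a => J a * (A a + B a + C a + D a + E a - Q a)) =
  fsum n (fun a => J a * A a) + fsum n (fun a => J a * B a) + fsum n (fun a => J a * C a)
  + fsum n (fun a => J a * D a) + fsum n (fun a => J a * E a) - fsum n (fun a => J a * Q a).
Proof. induction n; simpl; [ring|]. rewrite IHn. ring. Qed.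

Lemma JT_minus n (J A Q : nat -> R) :
  fsum n (fun a => J a * (A a - Q a)) = fsum n (fun a => J a * A a) - fsum n (fun a => J a * Q a).
Proof. induction n; simpl; [ring|]. rewrite IHn. ring. Qed.

Theorem proposition1p5
  (l N : nat) (m : nat -> R) (X : nat -> JF)
  (U0 : JF) (F0 : nat -> JF)
  (s : nat) (US : JF) (FS : nat -> JF)
  (h : nat) (lam : nat -> R)
  (sigma : nat) (Rf : JF) (FR : nat -> JF)
  (rho : nat) (G : nat -> JF)
  (Hm : forall p, (p < N)%nat -> 0 < m p)
  (HX : forall a, (a < 3 * N)%nat -> smooth l 0 (X a))
  (* (i) *)
  (HU0 : smooth l 0 U0)
  (H0 : forall k, (k < l)%nat -> forall z t, JT l (3 * N) X F0 k z t = pdq 0 k U0 z t)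
  (* (ii) *)
  (HUS : smooth l (S s) US)
  (HS : forall k, (k < l)%nat -> forall z t, JT l (3 * N) X FS k z t = Op l s US k z t)
  (* (iii) *)
  (Hh : (1 <= h)%nat)
  (Hlam : forall a, (a < 3 * N)%nat -> 0 < lam a)
  (* (iv) *)
  (Hsigma : (1 <= sigma)%nat)
  (HRf : smooth l sigma Rf)
  (HR : forall k, (k < l)%nat -> forall z t, JT l (3 * N) X FR k z t = - pdq sigma k Rf z t)
  (* (v) *)
  (Hrho : (1 <= rho)%nat)
  (HG : forall a, (a < 3 * N)%nat -> smooth l (rho - 1) (G a)) :
  let n := (3 * N)%nat in
  let Xdot := fun a => tder l (X a) in
  (* Q = (m_1 P_1', ..., m_N P_N'); coordinate a belongs to point a/3 *)
  let Q := fun a : nat => fun z t => m (a / 3)%nat * Xdot a z t in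
  let Qdot := fun a => tder l (Q a) in
  let FA := fun a : nat => fun z t => lam a * tdern l (S h) (X a) z t in
  let UA := fun z t =>
    / 2 * fsum n (fun a => lam a * tdern l h (X a) z t * tdern l h (X a) z t) in
  let gamma := fun z t => fsum l (fun k => JT l n X G k z t * z rho k) in
  let F := fun a : nat => fun z t => F0 a z t + FS a z t + FA a z t + FR a z t + G a z t in
  let r := Nat.max (Nat.max s (h - 1)) (Nat.max sigma rho) in
  let Lag := fun z t => / 2 * fsum n (fun a => Q a z t * Xdot a z t) + U0 z t in
  let Y := fun z t =>
    tdern l r Lag z t + tdern l (r - s) US z t
    - / INR h * tdern l (r - (h - 1)) UA z t
    - tdern l (r - sigma) Rf z t + tdern l (r - rho) gamma z t in
  (forall k, (k < l)%nat -> forall z t,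
      Op l r Y k z t = JT l n X (fun a z t => F a z t - Qdot a z t) k z t) /\
  (forall z t,
      (forall k, (k < l)%nat -> Op l r Y k z t = 0) <->
      (forall k, (k < l)%nat -> JT l n X Qdot k z t = JT l n X F k z t)).
Proof.
  intros n Xdot Q Qdot FA UA gamma F r Lag Y.
  assert (HX' : forall a, (a < n)%nat -> smooth l 0 (X a)) by exact HX.
  assert (HG' : forall a, (a < n)%nat -> smooth l (rho - 1) (G a)) by exact HG.
  destruct h as [|h']; [lia|].
  assert (Hh0: INR (S h') <> 0) by (apply not_0_INR; lia).
  assert (ELag: Lag = Lagc l n X (fun a => m (a/3)%nat) U0) by reflexivity.
  assert (EUA: UA = UAc l n X lam (S h')) by reflexivity.
  assert (Eg: gamma = gamc l n X G rho) by reflexivity.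
  assert (SL: smooth l 1 Lag) by (rewrite ELag; apply Lagc_smooth; auto).
  assert (SUA: smooth l (S h') UA) by (rewrite EUA; apply UAc_smooth; auto).
  assert (Sg: smooth l rho gamma) by (rewrite Eg; apply gamc_smooth; auto).
  assert (Eh: (S h' - 1)%nat = h') by lia.
  assert (EY: Y = fplus (fplus (fplus (fplus (tdern l r Lag) (tdern l (r - s) US))
      (fscal (- / INR (S h')) (tdern l (r - h') UA))) (fscal (-1) (tdern l (r - sigma) Rf)))
      (tdern l (r - rho) gamma)).
  { extensionality z; extensionality t. unfold Y, fplus, fscal. rewrite Eh. ring. }
  assert (Hr1: (s <= r)%nat) by lia.
  assert (Hr2: (h' <= r)%nat) by lia.
  assert (Hr3: (sigma <= r)%nat) by lia.
  assert (Hr4: (rho <= r)%nat) by lia.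
  assert (T1: smooth l (S r) (tdern l (r - 0) Lag)) by (apply smooth_tdern_r; auto; lia).
  assert (T2: smooth l (S r) (tdern l (r - s) US)) by (apply smooth_tdern_r; auto).
  assert (T3: smooth l (S r) (tdern l (r - h') UA)) by (apply smooth_tdern_r; auto).
  assert (T4: smooth l (S r) (tdern l (r - sigma) Rf)) by (apply smooth_tdern_r; auto; apply smooth_mono with sigma; auto).
  assert (T5: smooth l (S r) (tdern l (r - rho) gamma)) by (apply smooth_tdern_r; auto; apply smooth_mono with rho; auto).
  rewrite Nat.sub_0_r in T1.
  assert (Main: forall k, (k < l)%nat -> forall z t,
      Op l r Y k z t = JT l n X (fun a z t => F a z t - Qdot a z t) k z t).
  { intros k Hk z t. rewrite EY.
    rewrite (Op_plus l (S r)); [|repeat (apply smooth_plus || apply smooth_scal); auto | auto].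
    rewrite (Op_plus l (S r)); [|repeat (apply smooth_plus || apply smooth_scal); auto | auto using smooth_scal].
    rewrite (Op_plus l (S r)); [|repeat (apply smooth_plus || apply smooth_scal); auto | auto using smooth_scal].
    rewrite (Op_plus l (S r)); auto.
    rewrite (Op_scal l (S r)) by auto. rewrite (Op_scal l (S r)) by auto.
    rewrite <- (Nat.sub_0_r r) at 2.
    rewrite (Op_tdern' l 0 r Lag) by (auto; lia).
    rewrite (Op_tdern' l s r US) by auto.
    rewrite (Op_tdern' l h' r UA) by auto.
    rewrite (Op_tdern' l sigma r Rf) by (auto; apply smooth_mono with sigma; auto).
    rewrite (Op_tdern' l rho r gamma) by (auto; apply smooth_mono with rho; auto).
    rewrite ELag, EUA, Eg.
    rewrite (Op_Lag l n X (fun a => m (a/3)%nat) U0 k z t HX' HU0 Hk).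
    rewrite (Op_UA l n X lam h' k z t HX' Hk).
    rewrite (Op_Rf l sigma Rf k z t HRf).
    rewrite (Op_gamma l n X G rho k z t Hrho HX' HG' Hk).
    rewrite <- (HS k Hk z t).
    unfold JT. unfold F. rewrite JT_lin5.
    pose proof (H0 k Hk z t) as H0'. pose proof (HR k Hk z t) as HR'.
    unfold JT in H0', HR'. fold n in H0', HR'. rewrite H0', HR'.
    unfold pdq, JTc, fsumF, fmul, FA, Qdot, Q, Xdot. fold n.
    unfold fscal. field; auto. }
  split; [exact Main|].
  intros z t. split; intros H k Hk; specialize (H k Hk).
  - rewrite Main in H by auto. unfold JT in *. rewrite JT_minus in H. lra.
  - rewrite Main by auto. unfold JT in *. rewrite JT_minus. lra.
Qed.
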